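(* Let $q$ be an odd prime power with $q\equiv 1\pmod 4$, let $n$ be an even positive integer with $\gcd(n,q)=1$, and let $\lambda\in\mathrm{GF}(q)^*$ satisfy $\lambda^2=-1$. In the ring $R=\mathrm{GF}(q)[x]/(x^n+1)$ put $e_1(x)=\frac{\lambda}{2}(x^{n/2}-\lambda)$ and $e_2(x)=-\frac{\lambda}{2}(x^{n/2}+\lambda)$. Let $\mathcal{C}$ be a $q$-ary negacyclic code of length $n$ with generator polynomial $g(x)$, and define $$\mathrm{Res}_1(\mathcal{C})=\{c(x) \bmod (x^{n/2}+\lambda): c(x)\in\mathcal{C}\},\qquad \mathrm{Res}_2(\mathcal{C})=\{c(x) \bmod (x^{n/2}-\lambda): c(x)\in\mathcal{C}\},$$ viewed as $q$-ary linear codes of length $n/2$. Then $$\mathcal{C}=\{e_1(x)c_1(x)+e_2(x)c_2(x): c_1(x)\in \mathrm{Res}_1(\mathcal{C}),\ c_2(x)\in\mathrm{Res}_2(\mathcal{C})\}.$$ Furthermore: (1) $\mathrm{Res}_1(\mathcal{C})$ is the $q$-ary $(-\lambda)$-constacyclic code of length $n/2$ with generator polynomial $g_1(x)=\gcd(g(x),x^{n/2}+\lambda)$; (2) $\mathrm{Res}_2(\mathcal{C})$ is the $q$-ary $\lambda$-constacyclic code of length $n/2$ with generator polynomial $g_2(x)=\gcd(g(x),x^{n/2}-\lambda)$; (3) $\dim(\mathcal{C})=\dim(\mathrm{Res}_1(\mathcal{C}))+\dim(\mathrm{Res}_2(\mathcal{C}))$; (4) if $(x^{n/2}-\lambda)\mid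 g(x)$, then $d(\mathcal{C})=2\, d(\mathrm{Res}_1(\mathcal{C}))$; (5) if $(x^{n/2}+\lambda)\mid g(x)$, then $d(\mathcal{C})=2\, d(\mathrm{Res}_2(\mathcal{C}))$; (6) if $(x^{n/2}-\lambda)\nmid g(x)$ and $(x^{n/2}+\lambda)\nmid g(x)$, write $d_i=d(\mathrm{Res}_i(\mathcal{C}))$; then $d(\mathcal{C})=2\min\{d_1,d_2\}$ provided $2\min\{d_1,d_2\}\le \max\{d_1,d_2\}$, and $\max\{d_1,d_2\}\le d(\mathcal{C})\le 2\min\{d_1,d_2\}$ provided $2\min\{d_1,d_2\}>\max\{d_1,d_2\}$.
   Context: For $\mu\in\mathrm{GF}(q)^*$, a $q$-ary linear code of length $N$ is $\mu$-constacyclic if it is closed under $(c_0,\dots,c_{N-1})\mapsto(\mu c_{N-1},c_0,\dots,c_{N-2})$; identifying $(c_0,\dots,c_{N-1})$ with $c_0+c_1x+\dots+c_{N-1}x^{N-1}$, such codes are exactly the ideals of $\mathrm{GF}(q)[x]/(x^N-\mu)$. Negacyclic means $(-1)$-constacyclic. The generator polynomial of a constacyclic code is the monic polynomial of least degree generating the ideal (a divisor of $x^N-\mu$). Codewords of $\mathcal{C}$ are represented by polynomials of degree $<n$, and $c(x) \bmod (x^{n/2}\pm\lambda)$ denotes the remainder of degree $<n/2$. $d(\cdot)$ denotes minimum Hamming distance. *)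

(* Defs.v *)
From HB Require Import structures.
From mathcomp Require Import all_boot all_order all_algebra.
Set Implicit Arguments. Unset Strict Implicit. Unset Printing Implicit Defensive.
Import GRing.Theory.
Local Open Scope ring_scope.

(* Codewords of length N over F are row vectors 'rV[F]_N, identified with
   polynomials of degree < N via rVpoly / poly_rV (coefficient i = entry i). *)

Definition cmod (F : fieldType) (N : nat) (mu : F) : {poly F} := 'X^N - mu%:P.

(* The ideal of F[x]/(x^N - mu) generated by g, elements of the ring being
   represented by their reduced representatives (row vectors of length N). *)
Definition ideal_gen (F : finFieldType) (N : nat) (mu : F) (g : {poly F})
  : {set 'rV[F]_N} :=
  [set poly_rV ((g * rVpoly a) %% cmod N mu) | a : 'rV[F]_N].

Definition is_gen_poly (F : finFieldType) (N : nat) (mu : F)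
  (C : {set 'rV[F]_N}) (g : {poly F}) : Prop :=
  [/\ g \is monic, C = ideal_gen N mu g &
      forall h : {poly F}, h \is monic -> ideal_gen N mu h = C ->
        (size g <= size h)%N].

Definition Res (F : finFieldType) (N M : nat) (m : {poly F})
  (C : {set 'rV[F]_N}) : {set 'rV[F]_M} :=
  [set poly_rV (rVpoly c %% m) | c in C].

Definition mgcd (F : fieldType) (p q : {poly F}) : {poly F} :=
  (lead_coef (gcdp p q))^-1 *: gcdp p q.

Definition cdim (F : finFieldType) (N : nat) (C : {set 'rV[F]_N}) : nat :=
  \dim (<<enum C>>)%VS.

Definition wt (F : finFieldType) (N : nat) (v : 'rV[F]_N) : nat :=
  #|[set i : 'I_N | v 0 i != 0]|.

(* minimum Hamming distance (= minimum nonzero weight for linear codes);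
   convention: the zero code of length N has distance N *)
Definition mindist (F : finFieldType) (N : nat) (C : {set 'rV[F]_N}) : nat :=
  \big[minn/N]_(c in C | c != 0) wt c.

Arguments cmod {F} N mu.
Arguments ideal_gen {F} N mu g.
Arguments is_gen_poly {F} N mu C g.
Arguments Res {F N} M m C.
Arguments mgcd {F} p q.
Arguments cdim {F N} C.
Arguments wt {F N} v.
Arguments mindist {F N} C.

(* Main.v *)
Require Import Defs.
From HB Require Import structures.
From mathcomp Require Import all_boot all_order all_algebra.
From mathcomp Require Import all_field ring zify.
From mathcomp Require abelian.
Set Implicit Arguments. Unset Strict Implicit. Unset Printing Implicit Defensive.
Import GRing.Theory.
Local Open Scope ring_scope.


Lemma size_cmod (F : fieldType) N (mu : F) : (0 < N)%N -> size (cmod N mu) = N.+1.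
Proof. by move=> hN; rewrite /cmod size_XnsubC. Qed.

Lemma cmod_neq0 (F : fieldType) N (mu : F) : (0 < N)%N -> cmod N mu != 0.
Proof. by move=> hN; rewrite -size_poly_eq0 size_cmod. Qed.

Lemma size_modN (F : fieldType) N (mu : F) p : (0 < N)%N -> (size (p %% cmod N mu)%R <= N)%N.
Proof. by move=> hN; rewrite -ltnS -(size_cmod mu hN) ltn_modp cmod_neq0. Qed.

Lemma mem_ideal (F : finFieldType) N (mu : F) h v : (0 < N)%N ->
  (v \in ideal_gen N mu h) <-> exists y, v = poly_rV ((h * y) %% cmod N mu).
Proof.
move=> hN; split.
  by case/imsetP=> a _ ->; exists (rVpoly a).
case=> y ->; apply/imsetP; exists (poly_rV (y %% cmod N mu)) => //.
by rewrite poly_rV_K ?size_modN // modp_mul.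
Qed.

Lemma modp_dvd_mod (F : fieldType) (M P x : {poly F}) : P %| M -> (x %% M) %% P = x %% P.
Proof.
move=> hPM; rewrite [in RHS](divp_eq x M) modpD.
by rewrite (modp_eq0 (dvdp_mull _ hPM)) add0r.
Qed.

Lemma size_rVpoly (F : fieldType) N (v : 'rV[F]_N) : (size (rVpoly v) <= N)%N.
Proof. exact: size_poly. Qed.

Lemma wtE (F : finFieldType) N (v : 'rV[F]_N) : wt v = (\sum_(i < N) (v 0%R i != 0%R))%N.
Proof.
rewrite /wt -sum1_card big_mkcond /=; apply: eq_bigr => i _.
by rewrite inE; case: (v 0 i != 0).
Qed.

Lemma wt_poly (F : finFieldType) N (p : {poly F}) :
  wt (poly_rV p : 'rV_N) = (\sum_(0 <= i < N) ((p`_i)%R != 0%R))%N.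
Proof. by rewrite wtE big_mkord; apply: eq_bigr => i _; rewrite mxE. Qed.

Lemma wt_eq0 (F : finFieldType) N (v : 'rV[F]_N) : (wt v == 0%N) = (v == 0).
Proof.
rewrite /wt cards_eq0; apply/eqP/eqP => [h|->].
  apply/rowP => i; rewrite mxE; apply/eqP; apply: contraT => hi.
  have : i \in [set i | v 0 i != 0] by rewrite inE.
  by rewrite h inE.
by apply/setP => i; rewrite !inE mxE eqxx.
Qed.
Definition lclosed (F : finFieldType) N (S : {set 'rV[F]_N}) :=
  [/\ 0 \in S, (forall u v, u \in S -> v \in S -> u + v \in S) &
      (forall (a : F) u, u \in S -> a *: u \in S)].

Lemma span_sub (F : finFieldType) N (S : {set 'rV[F]_N}) (s : seq 'rV[F]_N) :
  lclosed S -> {subset s <= S} -> forall v, v \in <<s>>%VS -> v \in S.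
Proof.
case=> S0 SD SZ; elim: s => [|x s IH] hs v.
  by rewrite span_nil memv0 => /eqP->.
rewrite span_cons => /memv_addP [w /vlineP [k ->] [u hu ->]].
apply: SD; first by apply: SZ; apply: hs; rewrite inE eqxx.
by apply: IH => // y hy; apply: hs; rewrite inE hy orbT.
Qed.

Lemma card_lclosed (F : finFieldType) N (S : {set 'rV[F]_N}) :
  lclosed S -> #|S| = (#|F| ^ cdim S)%N.
Proof.
move=> hS; rewrite /cdim -card_vspace; apply: eq_card => v.
apply/idP/idP => [hv|].
  by apply: memv_span; rewrite mem_enum.
by apply: (span_sub hS) => y; rewrite mem_enum.
Qed.

Lemma ideal_lclosed (F : finFieldType) N (mu : F) h : (0 < N)%N ->
  lclosed (ideal_gen N mu h).
Proof.
move=> hN; split.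
- apply/(mem_ideal _ _ _ hN); exists 0; by rewrite mulr0 mod0p linear0.
- move=> u v /(mem_ideal _ _ _ hN) [y ->] /(mem_ideal _ _ _ hN) [z ->].
  apply/(mem_ideal _ _ _ hN); exists (y + z); by rewrite mulrDr modpD linearD.
- move=> a u /(mem_ideal _ _ _ hN) [y ->].
  apply/(mem_ideal _ _ _ hN); exists (a *: y); by rewrite -scalerAr modpZl linearZ.
Qed.

Lemma poly_rV_inj (F : fieldType) N (p q : {poly F}) :
  (size p <= N)%N -> (size q <= N)%N -> (poly_rV p : 'rV_N) = poly_rV q -> p = q.
Proof. by move=> hp hq e; rewrite -(poly_rV_K hp) -(poly_rV_K hq) e. Qed.

Lemma gen_ok (F : finFieldType) N (mu : F) h : (0 < N)%N ->
  h \is monic -> h %| cmod N mu -> is_gen_poly N mu (ideal_gen N mu h) h.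
Proof.
move=> hN hm hd; split => // k km e.
have : poly_rV (k %% cmod N mu) \in ideal_gen N mu k.
  by apply/(mem_ideal _ _ _ hN); exists 1; rewrite mulr1.
rewrite e => /(mem_ideal _ _ _ hN) [y] /poly_rV_inj.
move=> /(_ (size_modN _ _ hN) (size_modN _ _ hN)) ey.
have hk : h %| k.
  rewrite (divp_eq k (cmod N mu)) dvdp_addr; last by apply: dvdp_mull.
  by rewrite ey -dvdp_mod // dvdp_mulr.
apply: dvdp_leq => //; exact: monic_neq0.
Qed.
Lemma wt_leN (F : finFieldType) N (v : 'rV[F]_N) : (wt v <= N)%N.
Proof. by rewrite /wt -[X in (_ <= X)%N]card_ord max_card. Qed.

Lemma bigmin_le_seq (I : eqType) (r : seq I) (P : pred I) (G : I -> nat) N i :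
  i \in r -> P i -> (\big[minn/N]_(j <- r | P j) G j <= G i)%N.
Proof.
elim: r => // x r IH; rewrite inE big_cons; case/orP => [/eqP<-|hi] hP.
  by rewrite hP geq_minl.
case: (P x); last exact: IH.
by rewrite geq_min IH ?orbT.
Qed.

Lemma mindist_le (F : finFieldType) N (S : {set 'rV[F]_N}) c :
  c \in S -> c != 0 -> (mindist S <= wt c)%N.
Proof.
move=> cS c0; apply: bigmin_le_seq; first by rewrite mem_index_enum.
by rewrite cS.
Qed.

Lemma mindist_leN (F : finFieldType) N (S : {set 'rV[F]_N}) : (mindist S <= N)%N.
Proof.
rewrite /mindist; apply: (big_ind (fun x => x <= N)%N) => //.
  by move=> x y hx hy; rewrite geq_min hx.
by move=> i _; apply: wt_leN.
Qed.

Lemma mindist_ge (F : finFieldType) N (S : {set 'rV[F]_N}) k :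
  (k <= N)%N -> (forall c, c \in S -> c != 0 -> (k <= wt c)%N) -> (k <= mindist S)%N.
Proof.
move=> hk h; rewrite /mindist; apply: (big_ind (fun x => k <= x)%N) => //.
  by move=> x y hx hy; rewrite leq_min hx.
by move=> c /andP[]; apply: h.
Qed.

Lemma mindist_cases (F : finFieldType) N (S : {set 'rV[F]_N}) :
  (exists2 c, (c \in S) && (c != 0) & mindist S = wt c) \/
  ((forall c, c \in S -> c = 0) /\ mindist S = N).
Proof.
case: (boolP [exists c, (c \in S) && (c != 0)]) => [/existsP [c0 hc0]|hn].
  left.
  have : ((exists2 c, (c \in S) && (c != 0) & mindist S = wt c) \/ mindist S = N).
    rewrite /mindist; apply: (big_ind (fun x => (exists2 c, (c \in S) && (c != 0) & x = wt c) \/ x = N)).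
    - by right.
    - move=> x y hx hy /=; case: (leqP x y) => hxy.
        by [].
      by [].
    - by move=> i hi; left; exists i.
  case=> // hN; exists c0 => //; apply/eqP; rewrite eqn_leq.
  case/andP: hc0 => h1 h2.
  by rewrite mindist_le // hN wt_leN.
right; split.
  move=> c cS; apply/eqP; apply: contraNT hn => c0.
  by apply/existsP; exists c; rewrite cS.
rewrite /mindist big_pred0 // => c; apply: negbTE; apply: contra hn => h.
by apply/existsP; exists c.
Qed.
Lemma sc0 (F : fieldType) (x y : F) : (2:F) != 0 -> x + y = 0 -> x - y = 0 -> x = 0 /\ y = 0.
Proof.
move=> h2 hs hd.
have hy : y = - x by apply/eqP; rewrite -addr_eq0 addrC hs.
move: hd; rewrite hy opprK -mulr2n -mulr_natr => /eqP.
rewrite mulf_eq0 (negbTE h2) orbF => /eqP x0.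
by rewrite x0 oppr0.
Qed.

Lemma wtN (F : finFieldType) N (v : 'rV[F]_N) : wt (- v) = wt v.
Proof. by rewrite !wtE; apply: eq_bigr => i _; rewrite mxE oppr_eq0. Qed.

Lemma sc_le (F : fieldType) (a b : F) : (2:F) != 0 ->
  ((a != 0%R) <= ((a + b)%R != 0%R) + ((a - b)%R != 0%R))%N /\ ((b != 0%R) <= ((a + b)%R != 0%R) + ((a - b)%R != 0%R))%N.
Proof.
move=> h2; case hs: (a + b == 0); case hd: (a - b == 0) => /=.
- by have [-> ->] := sc0 h2 (eqP hs) (eqP hd); rewrite eqxx.
- by split; case: (a != 0); case: (b != 0).
- by split; case: (a != 0); case: (b != 0).
- by split; case: (a != 0); case: (b != 0).
Qed.

Lemma wt_pm_ge (F : finFieldType) N (u v : 'rV[F]_N) : (2:F) != 0 ->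
  (wt u <= wt (u + v) + wt (u - v))%N /\ (wt v <= wt (u + v) + wt (u - v))%N.
Proof.
move=> h2; rewrite !wtE -big_split /=; split; apply: leq_sum => i _; rewrite !mxE.
  by case: (sc_le (u 0 i) (v 0 i) h2).
by case: (sc_le (u 0 i) (v 0 i) h2).
Qed.

Lemma pm_eq0 (F : finFieldType) N (u v : 'rV[F]_N) : (2:F) != 0 ->
  u + v = 0 -> u - v = 0 -> u = 0 /\ v = 0.
Proof.
move=> h2 hs hd.
have key i : u 0 i = 0 /\ v 0 i = 0.
  have hs' := congr1 (fun w : 'rV[F]_N => w 0 i) hs.
  have hd' := congr1 (fun w : 'rV[F]_N => w 0 i) hd.
  move: hs' hd'; rewrite /= !mxE; exact: sc0.
by split; apply/rowP => i; rewrite mxE; case: (key i).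
Qed.

Lemma two_neq0 (F : finFieldType) : odd #|F| -> (2 : F) != 0.
Proof.
move=> hodd; apply/negP => h20.
have hc : (2%N \in [pchar F]) by rewrite inE h20.
have hpg := abelian.abelem_pgroup (abelian.fin_ring_pchar_abelem hc).
have := pnatPpi hpg (p := pdiv #|[set: F]|).
rewrite pi_pdiv cardsT card_finNzRing_gt1 => /(_ isT).
rewrite inE => /eqP hp.
move: hp; set k := pdiv _ => hp; have := pdiv_dvd #|F|; rewrite -/k hp dvdn2.
by move/negP; apply.
Qed.


Lemma mgcd_monic (F : fieldType) (p q : {poly F}) : q != 0 -> mgcd p q \is monic.
Proof.
move=> hq; rewrite monicE /mgcd lead_coefZ mulVf //.
by rewrite lead_coef_eq0 gcdp_eq0 negb_and hq orbT.
Qed.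

Lemma mgcd_dvdl (F : fieldType) (p q : {poly F}) : q != 0 -> mgcd p q %| p.
Proof.
move=> hq; rewrite /mgcd dvdpZl ?dvdp_gcdl //.
by rewrite invr_eq0 lead_coef_eq0 gcdp_eq0 negb_and hq orbT.
Qed.

Lemma mgcd_dvdr (F : fieldType) (p q : {poly F}) : q != 0 -> mgcd p q %| q.
Proof.
move=> hq; rewrite /mgcd dvdpZl ?dvdp_gcdr //.
by rewrite invr_eq0 lead_coef_eq0 gcdp_eq0 negb_and hq orbT.
Qed.

Lemma mgcd_bezout (F : fieldType) (p q : {poly F}) :
  exists u v, mgcd p q = u * p + v * q.
Proof.
have := egcdpE p q; set e := egcdp p q => /eqpP [[c1 c2] /andP [h1 h2] /= he].
exists (((lead_coef (gcdp p q))^-1 / c1 * c2) *: e.1).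
exists (((lead_coef (gcdp p q))^-1 / c1 * c2) *: e.2).
rewrite -!scalerAl -scalerDr -!scalerA -he !scalerA /mgcd.
by rewrite -mulrA mulVf // mulr1.
Qed.


Lemma ar1 d1 d2 m : (d1 <= m -> minn (2 * minn d1 d2) (maxn d1 d2) <= m + m)%N.
Proof. lia. Qed.
Lemma ar2 d1 d2 w : (d1 <= w -> minn (2 * minn d1 d2) (maxn d1 d2) <= 2 * w)%N.
Proof. lia. Qed.
Lemma ar3 d1 d2 w : (d2 <= w -> minn (2 * minn d1 d2) (maxn d1 d2) <= 2 * w)%N.
Proof. lia. Qed.
Lemma ar4 d1 d2 w1 w2 s : (d1 <= w1 -> d2 <= w2 -> w1 <= s -> w2 <= s ->
  minn (2 * minn d1 d2) (maxn d1 d2) <= s)%N.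
Proof. lia. Qed.
Lemma ar5 d1 d2 c : (c <= 2 * d1 -> c <= 2 * d2 -> minn (2 * minn d1 d2) (maxn d1 d2) <= c ->
  (2 * minn d1 d2 <= maxn d1 d2 -> c = 2 * minn d1 d2) /\
  (maxn d1 d2 < 2 * minn d1 d2 -> maxn d1 d2 <= c <= 2 * minn d1 d2))%N.
Proof. move=> *; split => ?; [|apply/andP; split]; lia. Qed.

Lemma sum_shift (G : nat -> nat) m :
  (\sum_(m <= i < m + m) G i = \sum_(0 <= i < m) G (i + m))%N.
Proof. by have := big_addn 0 (m + m) m xpredT G; rewrite add0n addnK. Qed.

Lemma core (F : finFieldType) (m : nat) (lam : F)
  (C : {set 'rV[F]_(m + m)}) (g : {poly F}) :
  (0 < m)%N -> (2 : F) != 0 -> lam ^+ 2 = -1 ->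
  is_gen_poly (m + m) (-1) C g ->
  let e1 : {poly F} := (lam / 2)%:P * ('X^m - lam%:P) in
  let e2 : {poly F} := (- (lam / 2))%:P * ('X^m + lam%:P) in
  let R1 : {set 'rV[F]_m} := Res m ('X^m + lam%:P) C in
  let R2 : {set 'rV[F]_m} := Res m ('X^m - lam%:P) C in
  [/\ C = [set poly_rV ((e1 * rVpoly c1 + e2 * rVpoly c2) %% ('X^(m + m) + 1))
             | c1 in R1, c2 in R2],
      is_gen_poly m (- lam) R1 (mgcd g ('X^m + lam%:P)),
      is_gen_poly m lam R2 (mgcd g ('X^m - lam%:P)),
      cdim C = (cdim R1 + cdim R2)%N &
      [/\ ('X^m - lam%:P) %| g -> mindist C = (2 * mindist R1)%N,
          ('X^m + lam%:P) %| g -> mindist C = (2 * mindist R2)%N &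
          ~~ (('X^m - lam%:P) %| g) -> ~~ (('X^m + lam%:P) %| g) ->
          let d1 := mindist R1 in let d2 := mindist R2 in
          ((2 * minn d1 d2 <= maxn d1 d2)%N -> mindist C = (2 * minn d1 d2)%N) /\
          ((maxn d1 d2 < 2 * minn d1 d2)%N ->
             (maxn d1 d2 <= mindist C <= 2 * minn d1 d2)%N)]].
Proof.
move=> hm h2 hl [gmon hCdef gmin] e1 e2 R1 R2.
have hlam0 : lam != 0.
  apply/eqP => h0; have := hl; rewrite h0 expr0n /= => /eqP; by rewrite eq_sym oppr_eq0 oner_eq0.
have hP : 'X^m + lam%:P = cmod m (- lam) by rewrite /cmod polyCN opprK.
have hQ : 'X^m - lam%:P = cmod m lam by [].
have hM : 'X^(m + m) + 1 = cmod (m + m) (-1) :> {poly F}.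
  by rewrite /cmod polyCN opprK polyC1.
have hm2 : (0 < m + m)%N by rewrite addn_gt0 hm.
have hPQ : ('X^m + lam%:P) * ('X^m - lam%:P) = 'X^(m + m) + 1.
  have -> : (1 : {poly F}) = - (lam%:P * lam%:P).
    by rewrite -polyCM -expr2 hl polyCN opprK polyC1.
  by rewrite exprD; ring.
set P := 'X^m + lam%:P in hP hPQ e2 R1 *.
set Q := 'X^m - lam%:P in hQ hPQ e1 R2 *.
set M := 'X^(m + m) + 1 in hM hPQ *.
have hP0 : P != 0 by rewrite hP cmod_neq0.
have hQ0 : Q != 0 by rewrite hQ cmod_neq0.
have hM0 : M != 0 by rewrite hM cmod_neq0.
have hPM : P %| M by rewrite -hPQ dvdp_mulIl.
have hQM : Q %| M by rewrite -hPQ dvdp_mulIr.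
have szP x : (size (x %% P)%R <= m)%N by rewrite hP size_modN.
have szQ x : (size (x %% Q)%R <= m)%N by rewrite hQ size_modN.
have szM x : (size (x %% M)%R <= m + m)%N by rewrite hM size_modN.
have sizeM : size M = (m + m).+1 by rewrite hM size_cmod.
have he : e1 + e2 = 1.
  have -> : (1 : {poly F}) = - (lam / 2)%:P * lam%:P *+ 2.
    rewrite -polyCN -polyCM -polyCMn -polyC1; congr (_%:P).
    rewrite mulNr mulrAC -expr2 hl mulN1r opprK -mulr_natr; field; exact: h2.
  by rewrite /e1 /e2 /P /Q; ring.
have hK2a x : (e1 * (x %% P)) %% M = (e1 * x) %% M.
  rewrite [in RHS](divp_eq x P) mulrDr modpD.
  have -> : e1 * (x %/ P * P) = ((lam / 2)%:P * (x %/ P)) * M.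
    by rewrite -hPQ /e1; ring.
  by rewrite modp_mull add0r.
have hK2b x : (e2 * (x %% Q)) %% M = (e2 * x) %% M.
  rewrite [in RHS](divp_eq x Q) mulrDr modpD.
  have -> : e2 * (x %/ Q * Q) = ((- (lam / 2))%:P * (x %/ Q)) * M.
    by rewrite -hPQ /e2; ring.
  by rewrite modp_mull add0r.
have hK3 a b : e1 * a + e2 * b = (2^-1)%:P * (a + b) + 'X^m * ((lam / 2)%:P * (a - b)).
  have -> : (2^-1 : F)%:P = - (lam / 2)%:P * lam%:P.
    rewrite -polyCN -polyCM; congr (_%:P).
    by rewrite mulNr mulrAC -expr2 hl mulN1r opprK.
  by rewrite /e1 /e2 /P /Q; ring.
have hsz3 (a b : {poly F}) : (size a <= m)%N -> (size b <= m)%N -> (size (e1 * a + e2 * b)%R <= m + m)%N.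
  move=> ha hb; rewrite hK3; apply/leq_sizeP => j hj.
  rewrite coefD coefCM coefXnM coefCM coefD coefB.
  rewrite !nth_default ?(leq_trans ha) ?(leq_trans hb) ?(leq_trans _ hj) ?leq_addr //.
  - by rewrite addr0 subrr !mulr0 if_same addr0.
  - lia.
  - lia.
have hR1 u : u \in R1 <-> exists y, u = poly_rV ((g * y) %% P).
  split.
    case/imsetP => c cC ->; move: cC; rewrite hCdef => /(mem_ideal _ _ _ hm2) [y ->].
    by exists y; rewrite -hM poly_rV_K ?szM // modp_dvd_mod.
  case=> y ->; apply/imsetP; exists (poly_rV ((g * y) %% M)).
    by rewrite hCdef; apply/(mem_ideal _ _ _ hm2); exists y; rewrite hM.
  by rewrite poly_rV_K ?szM // modp_dvd_mod.
have hR2 u : u \in R2 <-> exists y, u = poly_rV ((g * y) %% Q).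
  split.
    case/imsetP => c cC ->; move: cC; rewrite hCdef => /(mem_ideal _ _ _ hm2) [y ->].
    by exists y; rewrite -hM poly_rV_K ?szM // modp_dvd_mod.
  case=> y ->; apply/imsetP; exists (poly_rV ((g * y) %% M)).
    by rewrite hCdef; apply/(mem_ideal _ _ _ hm2); exists y; rewrite hM.
  by rewrite poly_rV_K ?szM // modp_dvd_mod.
have hsM (c : 'rV[F]_(m + m)) : (size (rVpoly c) < size M)%N by rewrite sizeM ltnS size_rVpoly.
have partA : C = [set poly_rV ((e1 * rVpoly c1 + e2 * rVpoly c2) %% M) | c1 in R1, c2 in R2].
  apply/setP => c; apply/idP/idP.
    move=> cC; apply/imset2P; exists (poly_rV (rVpoly c %% P)) (poly_rV (rVpoly c %% Q)).
    - by apply/imsetP; exists c.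
    - by apply/imsetP; exists c.
    rewrite !poly_rV_K ?szP ?szQ // modpD hK2a hK2b -modpD -mulrDl he mul1r.
    by rewrite modp_small ?rVpolyK.
  case/imset2P => u1 u2 /hR1 [y ->] /hR2 [z ->] ->.
  rewrite !poly_rV_K ?szP ?szQ // modpD hK2a hK2b -modpD.
  rewrite hCdef; apply/(mem_ideal _ _ _ hm2); exists (e1 * y + e2 * z); rewrite -hM.
  by congr (poly_rV (_ %% M)); ring.
have hI1 : R1 = ideal_gen m (- lam) (mgcd g P).
  apply/setP => u; apply/idP/idP.
    move/hR1 => [y ->]; apply/(mem_ideal _ _ _ hm); rewrite -hP.
    have [k hk] : exists k, g = k * mgcd g P by apply/dvdpP; apply: mgcd_dvdl.
    by exists (k * y); rewrite {1}hk; congr (poly_rV (_ %% P)); ring.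
  move/(mem_ideal _ _ _ hm) => [y ->]; rewrite -hP; apply/hR1.
  have [aa [bb hab]] := mgcd_bezout g P.
  exists (aa * y); rewrite hab mulrDl modpD.
  have -> : bb * P * y = (bb * y) * P by ring.
  by rewrite modp_mull addr0; congr (poly_rV (_ %% P)); ring.
have hI2 : R2 = ideal_gen m lam (mgcd g Q).
  apply/setP => u; apply/idP/idP.
    move/hR2 => [y ->]; apply/(mem_ideal _ _ _ hm); rewrite -hQ.
    have [k hk] : exists k, g = k * mgcd g Q by apply/dvdpP; apply: mgcd_dvdl.
    by exists (k * y); rewrite {1}hk; congr (poly_rV (_ %% Q)); ring.
  move/(mem_ideal _ _ _ hm) => [y ->]; rewrite -hQ; apply/hR2.
  have [aa [bb hab]] := mgcd_bezout g Q.
  exists (aa * y); rewrite hab mulrDl modpD.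
  have -> : bb * Q * y = (bb * y) * Q by ring.
  by rewrite modp_mull addr0; congr (poly_rV (_ %% Q)); ring.
have partB1 : is_gen_poly m (- lam) R1 (mgcd g P).
  rewrite hI1; apply: gen_ok => //; first exact: mgcd_monic.
  by rewrite -hP; apply: mgcd_dvdr.
have partB2 : is_gen_poly m lam R2 (mgcd g Q).
  rewrite hI2; apply: gen_ok => //; first exact: mgcd_monic.
  by rewrite -hQ; apply: mgcd_dvdr.
have hl2 : lam / 2 != 0 by rewrite mulf_neq0 ?invr_eq0.
have hW (u1 u2 : 'rV[F]_m) : wt (poly_rV ((e1 * rVpoly u1 + e2 * rVpoly u2) %% M) : 'rV_(m + m))
    = (wt (u1 + u2) + wt (u1 - u2))%N.
  rewrite modp_small ?sizeM ?ltnS ?hsz3 ?size_rVpoly // hK3.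
  rewrite wt_poly.
  rewrite -[u1 + u2]rVpolyK -[u1 - u2]rVpolyK !wt_poly linearD linearB /=.
  set pa := rVpoly u1; set pb := rVpoly u2.
  have sa : (size pa <= m)%N by apply: size_poly.
  have sb : (size pb <= m)%N by apply: size_poly.
  rewrite (@big_cat_nat _ _ _ m) ?leq_addr //= sum_shift; congr addn.
    apply: eq_big_nat => i /andP [_ hi].
    by rewrite coefD coefCM coefXnM hi addr0 mulf_eq0 negb_or invr_eq0 h2.
  apply: eq_big_nat => i /andP [_ hi].
  have za : pa`_(i + m) = 0 by rewrite nth_default // (leq_trans sa) ?leq_addl.
  have zb : pb`_(i + m) = 0 by rewrite nth_default // (leq_trans sb) ?leq_addl.
  rewrite coefD coefCM coefXnM coefD za zb addr0 mulr0 add0r ltnNge leq_addl /= addnK.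
  by rewrite coefCM mulf_eq0 negb_or hl2.
pose Phi := fun x1 x2 : 'rV[F]_m =>
  (poly_rV ((e1 * rVpoly x1 + e2 * rVpoly x2) %% M) : 'rV[F]_(m + m)).
have hPhiB w1 w2 z1 z2 : Phi w1 w2 - Phi z1 z2 = Phi (w1 - z1) (w2 - z2).
  rewrite /Phi -linearB /= -modpN -modpD; congr (poly_rV (_ %% M)).
  by rewrite !linearB /=; ring.
have hPhi_eq0 u1 u2 : (Phi u1 u2 == 0) = (u1 == 0) && (u2 == 0).
  apply/idP/idP.
    rewrite -wt_eq0 /Phi hW addn_eq0 !wt_eq0 => /andP [/eqP hs /eqP hd].
    by have [-> ->] := pm_eq0 h2 hs hd; rewrite eqxx.
  case/andP => /eqP -> /eqP ->.
  by rewrite /Phi linear0 !mulr0 addr0 mod0p linear0.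
have hPhi_inj u1 u2 v1 v2 : Phi u1 u2 = Phi v1 v2 -> u1 = v1 /\ u2 = v2.
  move/eqP; rewrite -subr_eq0 hPhiB hPhi_eq0 !subr_eq0 => /andP [/eqP -> /eqP ->].
  by [].
have hCl : lclosed C by rewrite hCdef; apply: ideal_lclosed.
have hR1l : lclosed R1 by rewrite hI1; apply: ideal_lclosed.
have hR2l : lclosed R2 by rewrite hI2; apply: ideal_lclosed.
have hcard : #|C| = (#|R1| * #|R2|)%N.
  rewrite {1}partA curry_imset2X card_imset ?cardsX //.
  by move=> [u1 u2] [v1 v2] /= e; have [-> ->] := hPhi_inj _ _ _ _ e.
have partC : cdim C = (cdim R1 + cdim R2)%N.
  have := card_lclosed hCl; rewrite hcard (card_lclosed hR1l) (card_lclosed hR2l) -expnD.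
  by move/eqP; rewrite eq_sym eqn_exp2l ?card_finNzRing_gt1 // => /eqP.
have hCPhi c : c \in C -> exists u1 u2, [/\ u1 \in R1, u2 \in R2 & c = Phi u1 u2].
  by rewrite {1}partA => /imset2P [u1 u2 h1 h2' ->]; exists u1, u2.
have hPhiC u1 u2 : u1 \in R1 -> u2 \in R2 -> Phi u1 u2 \in C.
  by move=> h1 h2'; rewrite partA; apply: imset2_f.
have R10 : (0 : 'rV[F]_m) \in R1 by case: hR1l.
have R20 : (0 : 'rV[F]_m) \in R2 by case: hR2l.
have hWl u : wt (Phi u 0) = (2 * wt u)%N by rewrite /Phi hW addr0 subr0 mul2n addnn.
have hWr u : wt (Phi 0 u) = (2 * wt u)%N by rewrite /Phi hW add0r sub0r wtN mul2n addnn.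
have hQg : Q %| g -> forall u, u \in R2 -> u = 0.
  move=> hd u /hR2 [y ->]; by rewrite modp_eq0 ?dvdp_mulr // linear0.
have hPg : P %| g -> forall u, u \in R1 -> u = 0.
  move=> hd u /hR1 [y ->]; by rewrite modp_eq0 ?dvdp_mulr // linear0.
have hR1nz : ~~ (P %| g) -> exists2 u, u \in R1 & u != 0.
  move=> hd; exists (poly_rV (g %% P)); first by apply/hR1; exists 1; rewrite mulr1.
  apply: contra hd => /eqP h0; apply/modp_eq0P.
  by apply: (@poly_rV_inj _ m) => //; rewrite ?size_poly0 ?szP // linear0.
have hR2nz : ~~ (Q %| g) -> exists2 u, u \in R2 & u != 0.
  move=> hd; exists (poly_rV (g %% Q)); first by apply/hR2; exists 1; rewrite mulr1.
  apply: contra hd => /eqP h0; apply/modp_eq0P.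
  by apply: (@poly_rV_inj _ m) => //; rewrite ?size_poly0 ?szQ // linear0.
have mR1 : (mindist R1 <= m)%N by apply: mindist_leN.
have mR2 : (mindist R2 <= m)%N by apply: mindist_leN.
split => //.
split.
- move=> hd; case: (mindist_cases R1) => [[u /andP [uR u0] hd1] | [hz hd1]].
    apply/eqP; rewrite eqn_leq; apply/andP; split.
      rewrite hd1 -hWl; apply: mindist_le; first exact: hPhiC.
      by rewrite hPhi_eq0 negb_and u0.
    apply: mindist_ge; first by rewrite mul2n -addnn leq_add.
    move=> c cC; have [u1 [u2 [h1 h2' ->]]] := hCPhi c cC.
    rewrite (hQg hd _ h2') hPhi_eq0 eqxx andbT => u10.
    by rewrite hWl leq_mul2l mindist_le.
  case: (mindist_cases C) => [[c /andP [cC c0] _] | [_ ->]].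
    have [u1 [u2 [h1 h2' ec]]] := hCPhi c cC.
    by move: c0; rewrite ec hPhi_eq0 (hz _ h1) (hQg hd _ h2') eqxx.
  by rewrite hd1 mul2n addnn.
- move=> hd; case: (mindist_cases R2) => [[u /andP [uR u0] hd1] | [hz hd1]].
    apply/eqP; rewrite eqn_leq; apply/andP; split.
      rewrite hd1 -hWr; apply: mindist_le; first exact: hPhiC.
      by rewrite hPhi_eq0 negb_and u0 orbT.
    apply: mindist_ge; first by rewrite mul2n -addnn leq_add.
    move=> c cC; have [u1 [u2 [h1 h2' ->]]] := hCPhi c cC.
    rewrite (hPg hd _ h1) hPhi_eq0 eqxx /= => u20.
    by rewrite hWr leq_mul2l mindist_le.
  case: (mindist_cases C) => [[c /andP [cC c0] _] | [_ ->]].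
    have [u1 [u2 [h1 h2' ec]]] := hCPhi c cC.
    by move: c0; rewrite ec hPhi_eq0 (hz _ h2') (hPg hd _ h1) eqxx.
  by rewrite hd1 mul2n addnn.
move=> hdQ hdP d1 d2.
have [a1 a1R a10] := hR1nz hdP.
have [a2 a2R a20] := hR2nz hdQ.
have up1 : (mindist C <= 2 * d1)%N.
  case: (mindist_cases R1) => [[u /andP [uR u0] hd1] | [hz _]]; last first.
    by move: a10; rewrite (hz _ a1R) eqxx.
  rewrite /d1 hd1 -hWl; apply: mindist_le; first exact: hPhiC.
  by rewrite hPhi_eq0 negb_and u0.
have up2 : (mindist C <= 2 * d2)%N.
  case: (mindist_cases R2) => [[u /andP [uR u0] hd1] | [hz _]]; last first.
    by move: a20; rewrite (hz _ a2R) eqxx.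
  rewrite /d2 hd1 -hWr; apply: mindist_le; first exact: hPhiC.
  by rewrite hPhi_eq0 negb_and u0 orbT.
have low : (minn (2 * minn d1 d2) (maxn d1 d2) <= mindist C)%N.
  apply: mindist_ge; first exact: ar1 mR1.
  move=> c cC; have [u1 [u2 [h1 h2' ->]]] := hCPhi c cC.
  rewrite hPhi_eq0 negb_and => hnz.
  have [e20|u20] := eqVneq u2 0.
    rewrite e20 hWl; have u10 : u1 != 0 by move: hnz; rewrite e20 eqxx orbF.
    exact: ar2 (mindist_le h1 u10).
  have [e10|u10] := eqVneq u1 0.
    rewrite e10 hWr; exact: ar3 (mindist_le h2' u20).
  rewrite /Phi hW; have [g1 g2] := wt_pm_ge u1 u2 h2.
  exact: ar4 (mindist_le h1 u10) (mindist_le h2' u20) g1 g2.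
exact: ar5.
Qed.

Theorem theorem7 (F : finFieldType) (n : nat) (lam : F)
  (C : {set 'rV[F]_n}) (g : {poly F}) :
  odd #|F| -> (#|F| %% 4 = 1)%N -> ~~ odd n -> (0 < n)%N -> coprime n #|F| ->
  lam ^+ 2 = -1 ->
  is_gen_poly n (-1) C g ->
  let m := (n./2)%N in
  let e1 : {poly F} := (lam / 2)%:P * ('X^m - lam%:P) in
  let e2 : {poly F} := (- (lam / 2))%:P * ('X^m + lam%:P) in
  let R1 : {set 'rV[F]_m} := Res m ('X^m + lam%:P) C in
  let R2 : {set 'rV[F]_m} := Res m ('X^m - lam%:P) C in
  [/\ C = [set poly_rV ((e1 * rVpoly c1 + e2 * rVpoly c2) %% ('X^n + 1))
             | c1 in R1, c2 in R2],
      is_gen_poly m (- lam) R1 (mgcd g ('X^m + lam%:P)),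
      is_gen_poly m lam R2 (mgcd g ('X^m - lam%:P)),
      cdim C = (cdim R1 + cdim R2)%N &
      [/\ ('X^m - lam%:P) %| g -> mindist C = (2 * mindist R1)%N,
          ('X^m + lam%:P) %| g -> mindist C = (2 * mindist R2)%N &
          ~~ (('X^m - lam%:P) %| g) -> ~~ (('X^m + lam%:P) %| g) ->
          let d1 := mindist R1 in let d2 := mindist R2 in
          ((2 * minn d1 d2 <= maxn d1 d2)%N -> mindist C = (2 * minn d1 d2)%N) /\
          ((maxn d1 d2 < 2 * minn d1 d2)%N ->
             (maxn d1 d2 <= mindist C <= 2 * minn d1 d2)%N)]].
Proof.
move=> hodd _ hev hn0 _ hl hC m.
have hn : n = (m + m)%N.
  by rewrite addnn /m -{1}(odd_double_half n) (negbTE hev) add0n.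
have hm : (0 < m)%N by move: hn0; rewrite hn addn_gt0 orbb.
clearbody m; subst n.
exact: core hm (two_neq0 hodd) hl hC.
Qed.
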